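(* For all $\alpha,\beta\in\Lambda(V)$, $\bigl(Z(\alpha),Z(\beta)\bigr)=\langle\alpha,\beta\rangle$.
   Context: Let $\omega$ be a primitive cube root of unity, $\mathcal{E}=\mathbb{Z}[\omega]$, $\theta=\omega-\bar\omega$. For a cubic form $F(x_0,\dots,x_4)$ defining a smooth threefold, let $V\subset\mathbb{P}^5$ be the smooth fourfold $F+x_5^3=0$ with automorphism $\sigma(x_0,\dots,x_5)=(x_0,\dots,x_4,\omega x_5)$. $H^4_0(V;\mathbb{Z})$ is the orthogonal complement (for $\alpha\cdot\beta=\int_V\alpha\wedge\beta$) of the pullback of the class of a $3$-plane. $\Lambda(V)$ is the $\mathcal{E}$-module with underlying group $H^4_0(V;\mathbb{Z})$, $\omega$ acting by $\sigma^*$, and Hermitian form $\langle\alpha,\beta\rangle=\frac12[3\alpha\cdot\beta-\theta\,\alpha\cdot((\sigma^* )^{-1}\beta-\sigma^*\beta)]$. On $H^4(V;\mathbb{C})$ let $(a,b)=3\int_V a\wedge\bar b$. Let $H^4_\omega(V;\mathbb{C})$ be the $\omega$-eigenspace of $\sigma^*$, and $Z:\Lambda(V)\otimes_{\mathcal{E}}\mathbb{C}=H^4_0(V;\mathbb{R})\to H^4_\omega(V;\mathbb{C})$ the map given by inclusion $H^4_0(V;\mathbb{R})\subset H^4(V;\mathbb{C})$ followed by projection to the $\omega$-eigenspace. *)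

(* Defs.v *)
(* The middle cohomology lattice H^4(V;Z) of the cubic
   fourfold V is modelled as Z^n ('rV[int]_n), with the intersection form
   given by its Gram matrix G, the automorphism sigma^* by an integer matrix S
   acting on row vectors (x |-> x *m S), and the class of a 3-plane by h. *)
From HB Require Import structures.
From mathcomp Require Import all_boot all_order all_algebra all_field.
Set Implicit Arguments. Unset Strict Implicit. Unset Printing Implicit Defensive.
Import Order.TTheory GRing.Theory Num.Theory.
Local Open Scope ring_scope.

Definition cvec n (x : 'rV[int]_n) : 'rV[algC]_n := map_mx (fun k : int => k%:~R) x.
Definition cmx n (A : 'M[int]_n) : 'M[algC]_n := map_mx (fun k : int => k%:~R) A.

Definition idot n (G : 'M[int]_n) (x y : 'rV[int]_n) : int := (x *m G *m y^T) 0 0.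

Definition cdot n (G : 'M[int]_n) (a b : 'rV[algC]_n) : algC :=
  (a *m cmx G *m b^T) 0 0.

Definition herm3 n (G : 'M[int]_n) (a b : 'rV[algC]_n) : algC :=
  3 * cdot G a (map_mx (@Num.conj _) b).

Definition prim n (G : 'M[int]_n) (h : 'rV[int]_n) (x : 'rV[int]_n) : Prop :=
  idot G x h = 0.

(* the Hermitian form <alpha,beta> on Lambda(V), omega acting by sigma^*;
   theta = omega - conj omega *)
Definition lamform n (G S : 'M[int]_n) (w : algC) (x y : 'rV[int]_n) : algC :=
  let th := w - w^* in
  (3 * (idot G x y)%:~R
   - th * cdot G (cvec x) (cvec y *m invmx (cmx S) - cvec y *m cmx S)) / 2.

(* z is the projection of the complex class a to the w-eigenspace of
   sigma^*, with respect to the eigenspace decomposition of H^4(V;C)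
   (eigenvalues 1, w, conj w since sigma^3 = 1) *)
Definition projw n (S : 'M[int]_n) (w : algC) (a z : 'rV[algC]_n) : Prop :=
  z *m cmx S = w *: z /\
  exists u v : 'rV[algC]_n,
    u *m cmx S = u /\ v *m cmx S = w^* *: v /\ a = z + u + v.

(* Main.v *)
Require Import Defs.
From HB Require Import structures.
From mathcomp Require Import all_boot all_order all_algebra all_field.
Import Order.TTheory GRing.Theory Num.Theory.
Local Open Scope ring_scope.

From mathcomp Require Import ring.
Import Order.TTheory GRing.Theory Num.Theory.
Local Open Scope ring_scope.

Section L.
Variables (n : nat) (G : 'M[int]_n).
Local Notation B := (cdot G).
Lemma BDl x y z : B (x + y) z = B x z + B y z.
Proof. by rewrite /cdot !mulmxDl mxE. Qed.
Lemma BDr x y z : B z (x + y) = B z x + B z y.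
Proof. by rewrite /cdot linearD /= mulmxDr mxE. Qed.
Lemma BZl k x z : B (k *: x) z = k * B x z.
Proof. by rewrite /cdot -!scalemxAl mxE. Qed.
Lemma BZr k x z : B z (k *: x) = k * B z x.
Proof. by rewrite /cdot linearZ /= -scalemxAr mxE. Qed.
Lemma BNr x z : B z (- x) = - B z x.
Proof. by rewrite -scaleN1r BZr mulN1r. Qed.
End L.

Lemma cmx_conj n (A : 'M[int]_n) : map_mx (@Num.conj _) (cmx A) = cmx A.
Proof. by apply/matrixP=> i j; rewrite !mxE rmorph_int. Qed.
Lemma cvec_conj n (A : 'rV[int]_n) : map_mx (@Num.conj _) (cvec A) = cvec A.
Proof. by apply/matrixP=> i j; rewrite !mxE rmorph_int. Qed.
Lemma cvecD n (x y : 'rV[int]_n) : cvec (x + y) = cvec x + cvec y.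
Proof. by apply/rowP=> i; rewrite !mxE intrD. Qed.
Lemma cvecM n (x : 'rV[int]_n) (A : 'M[int]_n) : cvec (x *m A) = cvec x *m cmx A.
Proof. by rewrite /cvec /cmx map_mxM. Qed.
Lemma cvec0 n : cvec (0 : 'rV[int]_n) = 0.
Proof. by apply/rowP=> i; rewrite !mxE. Qed.
Lemma BNl n (G : 'M[int]_n) x z : cdot G (- x) z = - cdot G x z.
Proof. by rewrite -scaleN1r BZl mulN1r. Qed.
Lemma conjN n (x : 'rV[algC]_n) : map_mx (@Num.conj _) (- x) = - map_mx (@Num.conj _) x.
Proof. by rewrite map_mxN. Qed.
Lemma conjD n (x y : 'rV[algC]_n) : map_mx (@Num.conj _) (x + y) = map_mx (@Num.conj _) x + map_mx (@Num.conj _) y.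
Proof. by rewrite map_mxD. Qed.
Lemma conjZ n k (x : 'rV[algC]_n) : map_mx (@Num.conj _) (k *: x) = k^* *: map_mx (@Num.conj _) x.
Proof. by rewrite map_mxZ. Qed.
Lemma conjM n (x : 'rV[algC]_n) (A : 'M[int]_n) : map_mx (@Num.conj _) (x *m cmx A) = map_mx (@Num.conj _) x *m cmx A.
Proof. by rewrite map_mxM cmx_conj. Qed.

Theorem lemma2p2 (n : nat) (G S : 'M[int]_n) (h : 'rV[int]_n) (w : algC)
  (* omega is a primitive cube root of unity *)
  (hw : 3.-primitive_root w)
  (* the intersection form is symmetric and unimodular (Poincare duality) *)
  (hGsym : G^T = G) (hGuni : `|\det G| = 1)
  (* sigma^* is an automorphism of H^4(V;Z) of order dividing 3 preserving
     the intersection form *)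
  (hS3 : S ^+ 3 = 1) (hSiso : S *m G *m S^T = G)
  (* sigma^* fixes the class h of a 3-plane, with h.h = 3 *)
  (hSh : h *m S = h) (hh : idot G h h = 3)
  (* omega acts by sigma^* on Lambda(V) = H^4_0(V;Z): omega^2+omega+1 = 0 *)
  (hE : forall x, prim G h x -> x *m S *m S + x *m S + x = 0) :
  forall alpha beta : 'rV[int]_n, prim G h alpha -> prim G h beta ->
    (exists z, projw S w (cvec alpha) z) /\
    (forall za zb, projw S w (cvec alpha) za -> projw S w (cvec beta) zb ->
       herm3 G za zb = lamform G S w alpha beta).
Proof.
move=> alpha beta pa pb.
set M := cmx S.
have w3 : w ^+ 3 = 1 := prim_expr_order hw.
have w1 : w != 1.
  by apply/eqP=> w1; move: (prim_order_dvd hw 1); rewrite w1 expr1 eqxx.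
have wq : w ^+ 2 + w + 1 = 0.
  have : (w - 1) * (w ^+ 2 + w + 1) = 0.
    by rewrite (_ : _ * _ = w ^+ 3 - 1); [rewrite w3 subrr | ring].
  by move/eqP; rewrite mulf_eq0 subr_eq0 (negbTE w1) => /eqP.
have wc : w^* = - 1 - w.
  have nw : `|w| = 1.
    apply/eqP; rewrite -(@pexpr_eq1 _ _ 3) //; by rewrite -normrX w3 normr1.
  have ww : w * w^* = 1 by rewrite -normCK nw expr1n.
  have : w^+2 * (w * w^*) = w^* * w^+3 by ring.
  rewrite ww w3 !mulr1 => <-.
  rewrite (_ : w^+2 = (w^+2 + w + 1) - 1 - w); [rewrite wq; ring | ring].
have M3 : M *m (M *m M) = 1%:M.
  move: hS3; rewrite !exprS expr0 mulr1 -!mulmxE -idmxE => hS3.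
  by rewrite /M -!map_mxM hS3 map_mx1.
have rM : forall x : 'rV_n, x *m M *m M *m M = x.
  by move=> x; rewrite -!mulmxA M3 mulmx1.
have MGM : M *m cmx G *m M^T = cmx G.
  by rewrite /M /cmx map_trmx -!map_mxM hSiso.
have BM : forall x y, cdot G (x *m M) (y *m M) = cdot G x y.
  move=> x y; rewrite /cdot trmx_mul !mulmxA -(mulmxA x M) -(mulmxA x (M *m cmx G)).
  by rewrite MGM.
have primC : forall x, prim G h x -> cvec x *m M *m M = - cvec x - cvec x *m M.
  move=> x /hE hx; have := congr1 (@cvec n) hx.
  rewrite !cvecD !cvecM cvec0 => H.
  by apply/eqP; rewrite -subr_eq0 opprB opprK addrA; apply/eqP; exact: H.
have uniq : forall x z, projw S w x z ->
    3 *: z = x + w^* *: (x *m M) + w *: (x *m M *m M).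
  move=> x z [zM [u [v [uM [vM ->]]]]].
  rewrite !mulmxDl zM uM vM -!scalemxAl zM ?uM vM !scalerA.
  apply/rowP=> i; rewrite !mxE wc.
  apply/eqP; rewrite eq_sym -subr_eq0; apply/eqP.
  rewrite [LHS](_ : _ = (w^+2+w+1) * ((w-2)*z 0 i + (w+2)*v 0 i)); last by ring.
  by rewrite wq mul0r.
have n3 : (3 : algC) != 0 by rewrite pnatr_eq0.
have n2 : (2 : algC) != 0 by rewrite pnatr_eq0.
set a := cvec alpha; set b := cvec beta.
have pA := primC alpha pa; have pB := primC beta pb.
rewrite -/a in pA; rewrite -/b in pB.
split.
  exists (3^-1 *: ((1 - w) *: a + (w^* - w) *: (a *m M))).
  split.
    rewrite -scalemxAl mulmxDl -!scalemxAl pA wc.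
    move: (a *m M) => q; apply/rowP=> i; rewrite !mxE.
    apply/eqP; rewrite -subr_eq0; apply/eqP.
    rewrite [LHS](_ : _ = (w^+2+w+1) * (3^-1 * ((alpha 0 i)%:~R + 2 * q 0 i))); last by field.
    by rewrite wq mul0r.
  exists 0, (a - 3^-1 *: ((1 - w) *: a + (w^* - w) *: (a *m M))).
  split; first by rewrite mul0mx.
  split.
    rewrite mulmxBl -scalemxAl mulmxDl -!scalemxAl pA wc.
    move: (a *m M) => q; apply/rowP=> i; rewrite !mxE.
    apply/eqP; rewrite -subr_eq0; apply/eqP.
    rewrite [LHS](_ : _ = (w^+2+w+1) * (3^-1 * ((alpha 0 i)%:~R + 2 * q 0 i))); last by field.
    by rewrite wq mul0r.
  by rewrite addr0 addrC subrK.
move=> za zb hza hzb.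
have Ua := uniq _ _ hza; rewrite pA in Ua.
have Ub := uniq _ _ hzb; rewrite pB in Ub.
have bc : map_mx (@Num.conj _) b = b := cvec_conj _ beta.
have Ubc := congr1 (map_mx (@Num.conj _)) Ub.
rewrite !(conjZ, conjD, conjN, conjM) bc conjCK conjC_nat in Ubc.
rewrite /herm3; set zc := map_mx (@Num.conj _) zb.
have E : cdot G (3 *: za) (3 *: zc) = 9 * cdot G za zc.
  by rewrite BZl BZr; ring.
rewrite Ua Ubc in E.
rewrite !(BDl, BDr, BZl, BZr, BNl, BNr) BM in E.
have H1 : cdot G (a *m M) b = - cdot G a b - cdot G a (b *m M).
  by have := BM a (b *m M *m M); rewrite rM => ->; rewrite pB BDr !BNr.
rewrite H1 in E.
have Xe : (idot G alpha beta)%:~R = cdot G a b.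
  by rewrite /cdot /a /b /cvec /cmx map_trmx -!map_mxM mxE.
have iM : invmx M = M *m M.
  have [uM _] := mulmx1_unit M3.
  by rewrite -[LHS]mulmx1 -M3 !mulmxA mulVmx // mul1mx.
rewrite /lamform -/M iM Xe -/a -/b mulmxA pB !BDr !BNr.
move: E; move: (cdot G za zc) (cdot G a b) (cdot G a (b *m M)) => K X Y E.
rewrite wc in E *.
rewrite (_ : 3 * K = 3^-1 * (9 * K)); last by field.
rewrite -E; apply/eqP; rewrite -subr_eq0; apply/eqP.
rewrite [LHS](_ : _ = -(w^+2+w+1) * X); last by field.
by rewrite wq oppr0 mul0r.
Qed.
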